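(* Let $B_R=(V,E)$ be the Bratteli diagram with $|V_n|=n+1$ vertices at each level $n\ge0$, in which each vertex of $V_n$ is joined to each vertex of $V_{n+1}$ by exactly one edge. Then the full group $G$ of $B_R$ is isomorphic to the group $R$ of rational permutations of the unit interval $[0,1)$.
   Context: For a Bratteli diagram with levels $V_0=\{v_0\},V_1,\dots$ and edge sets $E_n$ from $V_{n-1}$ to $V_n$, the path space $X$ is the set of infinite paths from $v_0$; $G_n$ is the group of homeomorphisms of $X$ that replace the first $n$ edges of each path by another path from $v_0$ to the same vertex of $V_n$ (depending only on those edges) and leave the rest unchanged; the full group is $G=\bigcup_nG_n$. For $n\in\mathbb N$ and a permutation $s$ of $\{0,1,\dots,n-1\}$, let $g_s:[0,1)\to[0,1)$ be $g_s(x)=\bigl(s(\lfloor nx\rfloor)+\{nx\}\bigr)/n$, where $\{a\}$ is the fractional part of $a$. The group $R$ is the set of all bijections $g_s$, over all $n\in\mathbb N$ and all permutations $s$ of $\{0,\dots,n-1\}$, under composition. *)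

(* Defs.v *)
From Stdlib Require Import Reals ZArith.
From mathcomp Require Import all_boot all_fingroup.

Set Implicit Arguments.
Unset Strict Implicit.
Unset Printing Implicit Defensive.

(* BV n = V_n ; BE n = the edge set E_{n+1} from V_n to V_{n+1}. *)
Record Bratteli := {
  BV : nat -> finType;
  BE : nat -> finType;
  bsrc : forall n, BE n -> BV n;
  brng : forall n, BE n -> BV n.+1;
  broot : BV 0;
  broot_unique : forall v : BV 0, v = broot
}.

Definition is_path (D : Bratteli) (x : forall n, BE D n) : Prop :=
  bsrc (x 0) = broot D /\ forall n, brng (x n) = bsrc (x n.+1).

Definition Path (D : Bratteli) := {x : forall n, BE D n | is_path x}.

(* G_n : bijections of the path space that replace the first n edges by
   another path (depending only on those first n edges) and leave all
   further edges unchanged.  (The endpoint in V_n is automatically kept,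
   since edge n+1 is unchanged; such maps are automatically homeomorphisms
   of the path space.) *)
Definition inGn (D : Bratteli) (n : nat) (g : Path D -> Path D) : Prop :=
  bijective g /\
  (forall x y : Path D, (forall k, (k < n)%N -> proj1_sig x k = proj1_sig y k) ->
      forall k, (k < n)%N -> proj1_sig (g x) k = proj1_sig (g y) k) /\
  (forall (x : Path D) k, (n <= k)%N -> proj1_sig (g x) k = proj1_sig x k).

Definition inFullGroup (D : Bratteli) (g : Path D -> Path D) : Prop :=
  exists n, inGn n g.

(* |V_n| = n+1, exactly one edge between each v in V_n and w in V_{n+1}:
   edges from V_n to V_{n+1} are the pairs (v,w). *)
Definition BR_E (n : nat) : finType := ('I_n.+1 * 'I_n.+2)%type.

Lemma BR_root_unique : forall v : 'I_1, v = ord0.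
Proof. by move=> v; apply/val_inj; case: v => [[|m] Hm]. Qed.

Definition B_R : Bratteli :=
  {| BV := fun n => 'I_n.+1;
     BE := BR_E;
     bsrc := fun n e => e.1;
     brng := fun n e => e.2;
     broot := ord0;
     broot_unique := BR_root_unique |}.

Definition I01 := {x : R | Rle 0 x /\ Rlt x 1}.
Open Scope R_scope.

(* g_s(x) = (s(floor(m x)) + frac(m x)) / m for a permutation s of
   {0,...,m-1}, here with m = n+1 >= 1. *)
Definition is_g_s (n : nat) (s : {perm 'I_n.+1}) (f : I01 -> I01) : Prop :=
  forall x : I01,
    proj1_sig (f x) =
    ((INR (nat_of_ord (s (inord (Z.to_nat (Int_part (INR n.+1 * proj1_sig x)))))) +
      frac_part (INR n.+1 * proj1_sig x)) / INR n.+1).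

Definition inRgroup (f : I01 -> I01) : Prop :=
  exists n (s : {perm 'I_n.+1}), is_g_s s f.

Definition comp_groups_isomorphic (A B : Type)
  (GA : (A -> A) -> Prop) (GB : (B -> B) -> Prop) : Prop :=
  exists phi : (A -> A) -> (B -> B),
    (forall g, GA g -> GB (phi g)) /\
    (forall g h, GA g -> GA h -> phi g = phi h -> g = h) /\
    (forall f, GB f -> exists2 g, GA g & phi g = f) /\
    (forall g h, GA g -> GA h -> phi (g \o h) = phi g \o phi h).

(* Main.v *)
Require Import Defs.
From Stdlib Require Import Reals ZArith.
From mathcomp Require Import all_boot all_fingroup.
From Stdlib Require Import Lia Lra ProofIrrelevance FunctionalExtensionality ClassicalEpsilon.
From mathcomp Require Import zify.
Set Implicit Arguments. Unset Strict Implicit.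
Local Open Scope nat_scope.

Definition dig (x : Path B_R) (i : nat) : nat := nat_of_ord ((proj1_sig x i : BR_E i).2).
Lemma dig_lt x i : dig x i < i.+2. Proof. exact: ltn_ord. Qed.

Fixpoint idxd (n : nat) (d : nat -> nat) : nat :=
  match n with 0 => 0 | n'.+1 => n'.+2 * idxd n' d + d n' end.
Definition idx n x := idxd n (dig x).

Lemma idxd_ext n d e : (forall i, i < n -> d i = e i) -> idxd n d = idxd n e.
Proof.
elim: n => [//|n IH] H /=. rewrite IH ?H //. by move=> i Hi; apply: H; apply: ltnW.
Qed.

Lemma idxd_lt n d : (forall i, i < n -> d i < i.+2) -> idxd n d < (n.+1)`!.
Proof.
elim: n => [//|n IH] H /=.
have h1 := IH (fun i Hi => H i (ltnW Hi)). have h2 := H n (ltnSn n).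
rewrite (factS n.+1). nia.
Qed.

Lemma idxd_inj n d e : (forall i, i < n -> d i < i.+2) -> (forall i, i < n -> e i < i.+2) ->
  idxd n d = idxd n e -> forall i, i < n -> d i = e i.
Proof.
elim: n => [//|n IH] Hd He /= Heq i Hi.
have h1 := Hd n (ltnSn n). have h2 := He n (ltnSn n).
have E1 : d n = e n.
  have := congr1 (fun z => z %% n.+2) Heq. rewrite /= !(mulnC n.+2) !modnMDl !modn_small //.
have E2 : idxd n d = idxd n e by rewrite E1 in Heq; nia.
case: (ltngtP i n) => Hin.
- apply: IH => // j Hj; [apply: Hd | apply: He]; exact: ltnW.
- by rewrite ltnS leqNgt Hin in Hi.
- by rewrite Hin.
Qed.

Lemma idxd_mod n d : d n < n.+2 -> idxd n.+1 d %% n.+2 = d n.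
Proof. move=> h /=. by rewrite mulnC modnMDl modn_small. Qed.

Fixpoint dec (n a : nat) : nat -> nat :=
  match n with 0 => fun _ => 0
  | n'.+1 => fun i => if i == n' then a %% n'.+2 else dec n' (a %/ n'.+2) i end.

Lemma decd_lt n a i : dec n a i < i.+2.
Proof.
elim: n a => [//|n IH] a /=. case: eqP => [->|_]; last exact: IH.
by rewrite ltn_mod.
Qed.

Lemma dec_idx n a : a < (n.+1)`! -> idxd n (dec n a) = a.
Proof.
elim: n a => [|n IH] a Ha /=.
  by move: Ha; rewrite /= ; case: a.
rewrite eqxx (idxd_ext (e := dec n (a %/ n.+2))); last first.
  by move=> i Hi; rewrite ifN // neq_ltn Hi.
rewrite IH; first by rewrite mulnC -divn_eq.
by rewrite ltn_divLR // mulnC -factS.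
Qed.

Lemma dec_last n a : dec n.+1 a n = a %% n.+2.
Proof. by rewrite /= eqxx. Qed.
Local Open Scope nat_scope.

Definition pe (d : nat -> nat) (k : nat) : BE B_R k :=
  ((match k as k0 return 'I_k0.+1 with 0 => ord0 | k'.+1 => inord (d k') end,
    inord (d k)) : BR_E k).

Lemma pe_path d : is_path (pe d).
Proof. by split. Qed.

Definition pathOf d : Path B_R := exist _ (pe d) (pe_path d).

Lemma dig_pathOf d i : d i < i.+2 -> dig (pathOf d) i = d i.
Proof. by move=> h; rewrite /dig /= inordK. Qed.

Lemma path_eq (x y : Path B_R) : (forall k, proj1_sig x k = proj1_sig y k) -> x = y.
Proof.
case: x => x Hx; case: y => y Hy /= H.
have E : x = y by apply: functional_extensionality_dep.
subst y; f_equal; apply: proof_irrelevance.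
Qed.

Lemma coord_dig (x : Path B_R) k : proj1_sig x k = pe (dig x) k.
Proof.
case: x => x [H0 H] /=.
rewrite /pe /dig /=.
case: k => [|k].
  move: (x 0) H0 => [a b] /= ->. by rewrite inord_val.
move: (H k) => /=. case: (x k.+1) => [a b] /= <-.
by rewrite !inord_val.
Qed.

Lemma coord_eq (x y : Path B_R) k : dig x k = dig y k ->
  (forall j, j.+1 = k -> dig x j = dig y j) -> proj1_sig x k = proj1_sig y k.
Proof.
move=> h1 h2. rewrite !coord_dig /pe h1. case: k h1 h2 => [//|k] _ h2.
by rewrite h2.
Qed.

Lemma path_eq_dig (x y : Path B_R) : (forall i, dig x i = dig y i) -> x = y.
Proof. move=> h; apply: path_eq => k; apply: coord_eq => // *; exact: h. Qed.

Lemma dig_coord (x y : Path B_R) k : proj1_sig x k = proj1_sig y k -> dig x k = dig y k.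
Proof. by rewrite /dig => ->. Qed.

Lemma idx_lt n x : idx n x < (n.+1)`!.
Proof. apply: idxd_lt => i _; exact: dig_lt. Qed.

Definition agree n (x y : Path B_R) := forall k, k < n -> proj1_sig x k = proj1_sig y k.

Lemma agree_idx n x y : agree n x y -> idx n x = idx n y.
Proof. move=> h; apply: idxd_ext => i Hi; apply: dig_coord; exact: h. Qed.

Lemma idx_agree n x y : idx n x = idx n y -> agree n x y.
Proof.
move=> h k Hk.
have H := idxd_inj (fun i _ => dig_lt x i) (fun i _ => dig_lt y i) h.
apply: coord_eq; first exact: H.
move=> j Hj; apply: H; lia.
Qed.

Lemma idx_pathOf n a : a < (n.+1)`! -> idx n (pathOf (dec n a)) = a.
Proof.
move=> h; rewrite /idx -[RHS](dec_idx h); apply: idxd_ext => i _.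
apply: dig_pathOf. exact: decd_lt.
Qed.
Local Open Scope R_scope.

Definition fl (m : nat) (y : R) : nat := Z.to_nat (Int_part (INR m * y)).
Definition Fval (m : nat) (s : nat -> nat) (y : R) : R :=
  (INR (s (fl m y)) + frac_part (INR m * y)) / INR m.

Lemma decomp (k : nat) (r : R) : 0 <= r < 1 ->
  Z.to_nat (Int_part (INR k + r)) = k /\ frac_part (INR k + r) = r.
Proof.
move=> [h0 h1].
have U : up (INR k + r) = (Z.of_nat k + 1)%Z.
  symmetry; apply: tech_up; rewrite plus_IZR -INR_IZR_INZ /=; lra.
have Ip : Int_part (INR k + r) = Z.of_nat k by rewrite /Int_part U; lia.
split; first by rewrite Ip Nat2Z.id.
by rewrite /frac_part Ip -INR_IZR_INZ; ring.
Qed.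

Lemma fsplit (m : nat) (y : R) : (0 < m)%N -> 0 <= y < 1 ->
  (fl m y < m)%N /\ INR m * y = INR (fl m y) + frac_part (INR m * y) /\
  0 <= frac_part (INR m * y) < 1.
Proof.
move=> Hm [y0 y1].
have Hm' : 0 < INR m by apply: lt_0_INR; apply/ltP.
set z := INR m * y.
have z0 : 0 <= z by rewrite /z; nra.
have z1 : z < INR m by rewrite /z; nra.
have [b1 b2] := base_Int_part z.
have Ipos : (0 <= Int_part z)%Z.
  have : (-1 < Int_part z)%Z by apply: lt_IZR; lra.
  lia.
have E : INR (fl m y) = IZR (Int_part z) by rewrite /fl -/z INR_IZR_INZ Z2Nat.id.
have [f0 f1] := base_fp z.
split; last split.
- apply/ltP; apply: INR_lt; lra.
- rewrite E /frac_part; ring.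
- lra.
Qed.

Lemma fl_frac_of (m k : nat) (r y : R) : (0 < m)%N -> 0 <= r < 1 -> INR m * y = INR k + r ->
  fl m y = k /\ frac_part (INR m * y) = r.
Proof. move=> _ hr E. rewrite /fl E. exact: decomp. Qed.

Lemma Fval_spec (m : nat) s y : (0 < m)%N -> 0 <= y < 1 ->
  fl m (Fval m s y) = s (fl m y) /\ frac_part (INR m * Fval m s y) = frac_part (INR m * y).
Proof.
move=> Hm hy.
have Hm' : 0 < INR m by apply: lt_0_INR; apply/ltP.
have [_ [_ hf]] := fsplit Hm hy.
apply: fl_frac_of => //.
rewrite /Fval; field; lra.
Qed.

Lemma Fval_comp (m : nat) s t y : (0 < m)%N -> 0 <= y < 1 ->
  Fval m s (Fval m t y) = Fval m (fun a => s (t a)) y.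
Proof.
move=> Hm hy. have [h1 h2] := Fval_spec t Hm hy.
by rewrite /Fval -/(fl m _) h1 h2 /Fval.
Qed.

Lemma Fval_range (m : nat) s y : (0 < m)%N -> 0 <= y < 1 -> (s (fl m y) < m)%N ->
  0 <= Fval m s y < 1.
Proof.
move=> Hm hy hs.
have Hm' : 0 < INR m by apply: lt_0_INR; apply/ltP.
have [_ [_ [f0 f1]]] := fsplit Hm hy.
have hs' : INR (s (fl m y)) + 1 <= INR m.
  rewrite -S_INR; apply: le_INR; apply/leP; exact: hs.
have p0 := pos_INR (s (fl m y)).
rewrite /Fval; split.
- apply: Rmult_le_pos; [lra | apply: Rlt_le; apply: Rinv_0_lt_compat; lra].
- apply (Rmult_lt_reg_r (INR m)); first lra.
  rewrite /Rdiv Rmult_assoc Rinv_l; lra.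
Qed.

Definition refine (k : nat) (s : nat -> nat) (a : nat) : nat := (s (a %/ k) * k + a %% k)%N.

Lemma Fval_refine (m k : nat) s y : (0 < m)%N -> (0 < k)%N -> 0 <= y < 1 ->
  Fval (m * k) (refine k s) y = Fval m s y.
Proof.
move=> Hm Hk hy.
have Hm' : 0 < INR m by apply: lt_0_INR; apply/ltP.
have Hk' : 0 < INR k by apply: lt_0_INR; apply/ltP.
have [l1 [e1 r1]] := fsplit Hm hy.
have [l2 [e2 r2]] := fsplit Hk r1.
set a := fl m y in l1 e1 *. set r := frac_part (INR m * y) in e1 r1 l2 e2 r2 *.
set j := fl k r in l2 e2 *. set r' := frac_part (INR k * r) in e2 r2 *.
have E : INR (m * k) * y = INR (k * a + j) + r'.
  rewrite mult_INR plus_INR mult_INR.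
  have -> : INR m * INR k * y = INR k * (INR m * y) by ring.
  rewrite e1 Rmult_plus_distr_l e2; ring.
have [F1 F2] := @fl_frac_of (m * k) (k * a + j)%N r' y ltac:(lia) r2 E.
rewrite /Fval -/(fl (m * k) y) F1 F2 /refine.
have -> : ((k * a + j) %/ k = a)%N.
  by rewrite mulnC divnMDl // divn_small // addn0.
have -> : ((k * a + j) %% k = j)%N.
  by rewrite mulnC modnMDl modn_small.
rewrite plus_INR !mult_INR. unfold r in e2. 
have -> : INR (s a) * INR k + INR j + r' = INR (s a) * INR k + INR k * r by rewrite e2; ring.
rewrite -/a -/r. field; lra.
Qed.

Lemma Fval_point (m a : nat) s : (a < m)%N ->
  0 <= INR a / INR m < 1 /\ Fval m s (INR a / INR m) = INR (s a) / INR m.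
Proof.
move=> ha.
have Hm' : 0 < INR m by apply: lt_0_INR; apply/ltP; lia.
have Ha : INR a < INR m by apply: lt_INR; apply/ltP.
have pa := pos_INR a.
have E : INR m * (INR a / INR m) = INR a + 0 by field; lra.
have [F1 F2] := fl_frac_of (m := m) (k := a) (y := INR a / INR m) (r := 0) ltac:(lia) ltac:(lra) E.
split.
- split; first by apply: Rmult_le_pos; [lra | apply: Rlt_le; apply: Rinv_0_lt_compat; lra].
  apply (Rmult_lt_reg_r (INR m)); first lra.
  rewrite /Rdiv Rmult_assoc Rinv_l; lra.
- rewrite /Fval -/(fl m _) F1 F2 Rplus_0_r //.
Qed.

Lemma Fval_inj (m : nat) s t : (0 < m)%N ->
  (forall y, 0 <= y < 1 -> Fval m s y = Fval m t y) -> forall a, (a < m)%N -> s a = t a.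
Proof.
move=> Hm H a ha.
have Hm' : 0 < INR m by apply: lt_0_INR; apply/ltP.
have [P1 P2] := Fval_point s ha. have [_ P3] := Fval_point t ha.
have := H _ P1. rewrite P2 P3 => E.
apply: INR_eq. apply (Rmult_eq_reg_r (/ INR m)); first exact E.
apply: Rinv_neq_0_compat; lra.
Qed.

Lemma Fval_ext (m : nat) s t y : (0 < m)%N -> 0 <= y < 1 ->
  (forall a, (a < m)%N -> s a = t a) -> Fval m s y = Fval m t y.
Proof.
move=> Hm hy H. have [l _] := fsplit Hm hy. by rewrite /Fval H.
Qed.
Local Open Scope nat_scope.

Definition Compat n (g : Path B_R -> Path B_R) t := forall x, idx n (g x) = t (idx n x).
Definition Data (g : Path B_R -> Path B_R) (f : I01 -> I01) n t :=
  inGn n g /\ Compat n g t /\ forall x, proj1_sig (f x) = Fval (n.+1)`! t (proj1_sig x).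
Definition Rel g f := exists n t, @Data g f n t.

Lemma I01_eq (f1 f2 : I01 -> I01) : (forall x, proj1_sig (f1 x) = proj1_sig (f2 x)) -> f1 = f2.
Proof.
move=> H; apply: functional_extensionality => x. move: (H x).
case: (f1 x) => a Ha; case: (f2 x) => b Hb /= E. subst b. f_equal; apply: proof_irrelevance.
Qed.

Lemma inGn_S n (g : Path B_R -> Path B_R) : inGn n g -> inGn n.+1 g.
Proof.
move=> [Hb [Hp Ht]]; split => //; split.
- move=> x y Hxy k Hk. case: (ltnP k n) => Hkn.
  + apply: Hp => // j Hj; apply: Hxy; lia.
  + rewrite !Ht //. apply: Hxy => //.
- move=> x k Hk; apply: Ht; lia.
Qed.

Lemma compat_S n (g : Path B_R -> Path B_R) t : inGn n g -> Compat n g t -> Compat n.+1 g (refine n.+2 t).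
Proof.
move=> [_ [_ Ht]] Hc x.
rewrite /idx /= -/(idx n _) -/(idx n x) Hc /refine.
have -> : dig (g x) n = dig x n by apply: dig_coord; apply: Ht.
have hd := dig_lt x n.
rewrite [n.+2 * idx n x]mulnC divnMDl // divn_small // addn0 modnMDl modn_small //; lia.
Qed.

Lemma fact_pos n : 0 < n`!. Proof. exact: fact_gt0. Qed.

Lemma data_S g f n t : Data g f n t -> Data g f n.+1 (refine n.+2 t).
Proof.
move=> [H1 [H2 H3]]; split; first exact: inGn_S.
split; first exact: compat_S.
move=> x. rewrite H3 (factS n.+1) mulnC Fval_refine //; [exact: fact_pos | exact: proj2_sig x].
Qed.

Lemma data_up g f n t n' : Data g f n t -> n <= n' -> exists t', Data g f n' t'.
Proof.
move=> D; elim: n' => [|n' IH] h.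
  have E : n = 0 by lia. subst n. by exists t.
case: (ltngtP n n'.+1) => hn; last by subst; exists t.
- have [t' D'] := IH ltac:(lia). exists (refine n'.+2 t'); exact: data_S.
- lia.
Qed.

Lemma compat_unique n g t1 t2 : Compat n g t1 -> Compat n g t2 ->
  forall a, a < (n.+1)`! -> t1 a = t2 a.
Proof.
move=> H1 H2 a ha. have E := idx_pathOf ha.
by rewrite -E -H1 -H2.
Qed.

Lemma Rel_unique g f1 f2 : Rel g f1 -> Rel g f2 -> f1 = f2.
Proof.
move=> [n1 [t1 D1]] [n2 [t2 D2]].
have [u1 [G1 [C1 V1]]] := data_up D1 (leq_maxl n1 n2).
have [u2 [_ [C2 V2]]] := data_up D2 (leq_maxr n1 n2).
apply: I01_eq => x. rewrite V1 V2. apply: Fval_ext; first exact: fact_pos.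
  exact: proj2_sig x.
exact: compat_unique.
Qed.

Definition tg n (g : Path B_R -> Path B_R) a := idx n (g (pathOf (dec n a))).

Lemma compat_tg n (g : Path B_R -> Path B_R) : inGn n g -> Compat n g (tg n g).
Proof.
move=> [_ [Hp _]] x. rewrite /tg. apply: agree_idx. apply: Hp.
apply: idx_agree. rewrite idx_pathOf //. exact: idx_lt.
Qed.

Lemma compat_range n g t : Compat n g t -> forall a, a < (n.+1)`! -> t a < (n.+1)`!.
Proof. move=> H a ha. rewrite -(idx_pathOf ha) -H. exact: idx_lt. Qed.

Definition mkF m t (Hm : 0 < m) (Ht : forall a, a < m -> t a < m) : I01 -> I01 :=
  fun x => exist _ (Fval m t (proj1_sig x))
    (Fval_range (s := t) Hm (proj2_sig x) (Ht _ (proj1 (fsplit Hm (proj2_sig x))))).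

Lemma Rel_of_G n (g : Path B_R -> Path B_R) : inGn n g -> exists f, Rel g f.
Proof.
move=> H.
exists (mkF (fact_pos n.+1) (compat_range (compat_tg H))).
exists n, (tg n g); split => //; split => //. exact: compat_tg.
Qed.

Lemma surj_inj M t u : (forall a, a < M -> t a < M) -> (forall b, b < M -> u b < M) ->
  (forall b, b < M -> t (u b) = b) -> forall a b, a < M -> b < M -> t a = t b -> a = b.
Proof.
move=> Ht Hu Htu a b ha hb E.
pose G (i : 'I_M) : 'I_M := Ordinal (Hu i (ltn_ord i)).
have Gi : injective G.
  move=> i j /(congr1 val) /= e. apply: ord_inj.
  by rewrite -(Htu i (ltn_ord i)) -(Htu j (ltn_ord j)) e.
have [H GH HG] := injF_bij Gi.
have key : forall (c : nat) (hc : c < M), t c = val (H (Ordinal hc)).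
  move=> c hc. have := congr1 val (HG (Ordinal hc)). rewrite /= => e.
  by rewrite -{1}e Htu.
have := key a ha. have := key b hb. rewrite E => -> /val_inj e.
have := congr1 G e. rewrite !HG => /(congr1 val) //.
Qed.

Lemma toR m t f : 0 < m -> (forall a, a < m -> t a < m) ->
  (forall a b, a < m -> b < m -> t a = t b -> a = b) ->
  (forall x, proj1_sig (f x) = Fval m t (proj1_sig x)) -> inRgroup f.
Proof.
case: m => [//|n] _ Ht Hi Hf.
have inj : injective (fun i : 'I_n.+1 => (inord (t i) : 'I_n.+1)).
  move=> i j /(congr1 val) /=. rewrite !inordK; try exact: Ht (ltn_ord _).
  move=> e; apply: ord_inj; exact: Hi.
have hf : forall x : I01, fl n.+1 (proj1_sig x) < n.+1 :=
  fun x => proj1 (fsplit (ltn0Sn n) (proj2_sig x)).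
exists n, (perm inj) => x. rewrite Hf /Fval permE.
have h := hf x. rewrite -/(fl n.+1 _) (inordK h) inordK //; exact: Ht.
Qed.
Local Open Scope nat_scope.

Definition Gd N t (x : Path B_R) i := if i < N then dec N (t (idx N x)) i else dig x i.
Definition Gt N t (x : Path B_R) : Path B_R := pathOf (Gd N t x).

Lemma Gd_lt N t x i : Gd N t x i < i.+2.
Proof. rewrite /Gd; case: ifP => _; [exact: decd_lt | exact: dig_lt]. Qed.

Lemma dig_Gt N t x i : dig (Gt N t x) i = Gd N t x i.
Proof. apply: dig_pathOf; exact: Gd_lt. Qed.

Definition tA N t := forall a, a < (N.+1)`! -> t a < (N.+1)`!.

Lemma idx_Gt N t x : tA N t -> idx N (Gt N t x) = t (idx N x).
Proof.
move=> Ht. rewrite /idx -[RHS](dec_idx (Ht _ (idx_lt N x))).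
apply: idxd_ext => i Hi. by rewrite dig_Gt /Gd Hi.
Qed.

Lemma tail_Gt N t x k : (forall a, a < (N.+2)`! -> t a %% N.+2 = a %% N.+2) ->
  N.+1 <= k -> proj1_sig (Gt N.+1 t x) k = proj1_sig x k.
Proof.
move=> Hb hk. apply: coord_eq.
  by rewrite dig_Gt /Gd ifN // -leqNgt.
move=> j hj. rewrite dig_Gt /Gd.
case: ifP => hjN; last by [].
have -> : j = N by lia.
rewrite dec_last Hb; last exact: idx_lt.
rewrite /idx idxd_mod //. exact: dig_lt.
Qed.

Lemma Gt_comp N t t' x : tA N t -> tA N t' ->
  (forall a, a < (N.+1)`! -> t (t' a) = a) -> Gt N t (Gt N t' x) = x.
Proof.
move=> Ht Ht' Htt. apply: path_eq_dig => i.
rewrite dig_Gt /Gd. case: ifP => hi; last by rewrite dig_Gt /Gd hi.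
rewrite idx_Gt // Htt; last exact: idx_lt.
apply: (idxd_inj (n := N)) => //.
- move=> *; exact: decd_lt.
- move=> *; exact: dig_lt.
- rewrite dec_idx //. exact: idx_lt.
Qed.

Lemma Gt_inGn N t t' : tA N.+1 t -> tA N.+1 t' ->
  (forall a, a < (N.+2)`! -> t (t' a) = a) -> (forall a, a < (N.+2)`! -> t' (t a) = a) ->
  (forall a, a < (N.+2)`! -> t a %% N.+2 = a %% N.+2) ->
  inGn N.+1 (Gt N.+1 t).
Proof.
move=> Ht Ht' H1 H2 Hb. split; last split.
- exists (Gt N.+1 t') => x; exact: Gt_comp.
- move=> x y Hxy. apply: idx_agree. rewrite !idx_Gt //.
  by rewrite (agree_idx Hxy).
- move=> x k hk; exact: tail_Gt.
Qed.
Local Open Scope nat_scope.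

Lemma refine_lt m k s a : 0 < k -> (forall q, q < m -> s q < m) -> a < m * k ->
  refine k s a < m * k.
Proof.
move=> hk hs ha. rewrite /refine.
have hq : a %/ k < m by rewrite ltn_divLR.
have h1 := hs _ hq. have h2 : a %% k < k by rewrite ltn_mod.
nia.
Qed.

Lemma refine_inv m k s s' a : 0 < k -> (forall q, q < m -> s (s' q) = q) -> a < m * k ->
  refine k s (refine k s' a) = a.
Proof.
move=> hk hs ha. rewrite /refine.
have h2 : a %% k < k by rewrite ltn_mod.
rewrite divnMDl // (divn_small h2) addn0 modnMDl modn_mod hs; last by rewrite ltn_divLR.
by rewrite -divn_eq.
Qed.

Lemma refine_mod k s a d : d %| k -> refine k s a %% d = a %% d.
Proof.
move=> /dvdnP [c ->]. rewrite /refine mulnA modnMDl.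
by rewrite modn_dvdm // dvdn_mull.
Qed.

Lemma inGn_comp n (g h : Path B_R -> Path B_R) : inGn n g -> inGn n h -> inGn n (g \o h).
Proof.
move=> [g1 [g2 g3]] [h1 [h2 h3]]; split; first exact: bij_comp.
split.
- move=> x y Hxy; apply: g2; exact: h2.
- move=> x k hk /=; rewrite g3 // h3 //.
Qed.

Definition phi (g : Path B_R -> Path B_R) : I01 -> I01 :=
  epsilon (inhabits (fun x : I01 => x)) (Rel g).

Lemma Rel_phi g : inFullGroup g -> Rel g (phi g).
Proof. move=> [n Hg]. apply: epsilon_spec. exact: Rel_of_G Hg. Qed.

Lemma phi_eq g f : Rel g f -> phi g = f.
Proof. move=> H. apply: (Rel_unique _ H). apply: epsilon_spec. by exists f. Qed.

Lemma common g h : inFullGroup g -> inFullGroup h ->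
  exists n t u, Data g (phi g) n t /\ Data h (phi h) n u.
Proof.
move=> /Rel_phi [n1 [t1 D1]] /Rel_phi [n2 [t2 D2]].
have [u1 D1'] := data_up D1 (leq_maxl n1 n2).
have [u2 D2'] := data_up D2 (leq_maxr n1 n2).
by exists (maxn n1 n2), u1, u2.
Qed.

Theorem mainTheorem19 :
  comp_groups_isomorphic (@inFullGroup B_R) inRgroup.
Proof.
exists phi. split; last split; last split.
-
  move=> g /Rel_phi [n [t [H1 [H2 H3]]]].
  apply: (toR (m := (n.+1)`!) (t := t)) => //.
  + exact: fact_pos.
  + exact: compat_range H2.
  + have [g' gK g'K] := H1.1.
    apply: (surj_inj (u := fun b => idx n (g' (pathOf (dec n b))))).
    * exact: compat_range H2.
    * move=> b _; exact: idx_lt.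
    * move=> b hb. by rewrite -H2 g'K idx_pathOf.
-
  move=> g h Hg Hh E.
  have [n [t [u [[G1 [C1 V1]] [G2 [C2 V2]]]]]] := common Hg Hh.
  have tu : forall a, a < (n.+1)`! -> t a = u a.
    apply: Fval_inj; first exact: fact_pos.
    move=> y hy. by rewrite -(V1 (exist _ y hy)) -(V2 (exist _ y hy)) E.
  apply: functional_extensionality => x. apply: path_eq => k.
  case: (ltnP k n) => hk.
  + apply: (idx_agree (n := n)) => //. by rewrite C1 C2 tu // idx_lt.
  + by rewrite G1.2.2 // G2.2.2.
-
  move=> f [n [s Hs]].
  pose k := n`! * n.+2.
  have Mk : (n.+2)`! = n.+1 * k by rewrite /k !factS; lia.
  have hk : 0 < k by rewrite /k muln_gt0 fact_gt0.
  pose s1 a := nat_of_ord (s (inord a)).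
  pose s2 a := nat_of_ord ((s^-1)%g (inord a)).
  have s12 : forall q, q < n.+1 -> s1 (s2 q) = q.
    move=> q hq. by rewrite /s1 /s2 inord_val permKV inordK.
  have s21 : forall q, q < n.+1 -> s2 (s1 q) = q.
    move=> q hq. by rewrite /s1 /s2 inord_val permK inordK.
  pose t := refine k s1. pose t' := refine k s2.
  have tA1 : tA n.+1 t.
    move=> a; rewrite Mk => ha. apply: refine_lt => // q _. exact: ltn_ord.
  have tA2 : tA n.+1 t'.
    move=> a; rewrite Mk => ha. apply: refine_lt => // q _. exact: ltn_ord.
  have Hb : forall a, a < (n.+2)`! -> t a %% n.+2 = a %% n.+2.
    move=> a _. apply: refine_mod. exact: dvdn_mull.
  have Gin : inGn n.+1 (Gt n.+1 t).
    apply: (Gt_inGn (t' := t')) => // a; rewrite Mk => ha.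
    exact: (refine_inv hk s12 ha). exact: (refine_inv hk s21 ha).
  exists (Gt n.+1 t); first by exists n.+1.
  apply: phi_eq. exists n.+1, t. split => //. split.
  + move=> x; exact: idx_Gt.
  + move=> x. rewrite Hs Mk Fval_refine //; last exact: proj2_sig x.
-
  move=> g h Hg Hh.
  have [n [t [u [[G1 [C1 V1]] [G2 [C2 V2]]]]]] := common Hg Hh.
  apply: phi_eq. exists n, (fun a => t (u a)). split; first exact: inGn_comp.
  split.
  + move=> x /=. by rewrite C1 C2.
  + move=> x /=. rewrite V1 V2 Fval_comp //; [exact: fact_pos | exact: proj2_sig x].
Qed.
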